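(* Let $(K,\mathrm{val})$ be a $2$-henselian valued field whose residue class field $F$ has characteristic $\neq2$, let $A$ be a subring with $B\subseteq A\subseteq K$, $H=\mathrm{val}(A^\times)$, and let $\mathcal M,\mathcal N$ be quasi-quadratic modules in $A$. Write $M_g=M_g^A(\mathcal M)$, $N_g=M_g^A(\mathcal N)$. Then for every $g\in H\cup G_{\ge e}$: (1) $M_g^A(\mathcal M\cap\mathcal N)=M_g\cap N_g$; (2) $M_g^A(\mathcal M+\mathcal N)=F$ if there exists $h\in H\cup G_{\ge e}$ with $g\ge h$ and $M_h+N_h=F$, and $M_g^A(\mathcal M+\mathcal N)=M_g+N_g$ otherwise.
   Context: Let $(G,\le)$ be a totally ordered abelian group written multiplicatively with identity $e$; $G_{\ge e}=\{g\in G:g\ge e\}$, $G^2=\{g^2:g\in G\}$. Let $(K,\mathrm{val})$ be a valued field with surjective valuation $\mathrm{val}:K\to G\cup\{\infty\}$, valuation ring $B=\{x:\mathrm{val}(x)\ge e\}$, residue map $\pi:B\to F$, residue field $F$. A strict unit is $x\in B^\times$ with $\pi(x)=1$; when $\mathrm{char}F\ne2$, $2$-henselian is equivalent to every strict unit being a square in $K$. For a subring $A$ with $B\subseteq A\subseteq K$ put $H=\mathrm{val}(A^\times)$. For $g\in G$, $\overline g$ is its class in $G/G^2$. A quasi-quadratic module in a commutative ring $R$ is a subset $M\subseteq R$ with $M+M\subseteq M$ and $a^2M\subseteq M$ for all $a\in R$. A pseudo-angular component map is a map $\mathrm{p.an}:K^\times\to F^\times$ such that: (1) $\mathrm{p.an}(u)=\pi(u)$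 for $u\in B^\times$; (2) $\mathrm{p.an}(ux)=\pi(u)\mathrm{p.an}(x)$ for $u\in B^\times,x\in K^\times$; (3) for all $g\in G$, $c\in F^\times$ there is $w\in K$ with $\mathrm{val}(w)=g$, $\mathrm{p.an}(w)=c$; (4) for nonzero $x_1,x_2$ with $x_1+x_2\ne0$: if $\mathrm{val}(x_1)<\mathrm{val}(x_2)$ then $\mathrm{p.an}(x_1+x_2)=\mathrm{p.an}(x_1)$; if $\mathrm{val}(x_1)=\mathrm{val}(x_2)$ and $\mathrm{p.an}(x_1)+\mathrm{p.an}(x_2)\ne0$ then $\mathrm{val}(x_1+x_2)=\mathrm{val}(x_1)$ and $\mathrm{p.an}(x_1+x_2)=\mathrm{p.an}(x_1)+\mathrm{p.an}(x_2)$; (5) if $x,y\in K^\times$, $\overline{\mathrm{val}(x)}=\overline{\mathrm{val}(y)}$ and $\mathrm{p.an}(x)=\mathrm{p.an}(y)$ then $y=u^2x$ for some $u\in K^\times$; (6) for $a,u\in K^\times$ there is $k\in F^\times$ with $\mathrm{p.an}(au^2)=\mathrm{p.an}(a)k^2$. Such a map exists under the hypotheses; fix one. For a quasi-quadratic module $\mathcal M$ in $A$ and $g\in G$: $M_g^A(\mathcal M)=\{\mathrm{p.an}(x):x\in\mathcal M\setminus\{0\},\ \mathrm{val}(x)=g\}\cup\{0\}$. *)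

(* Defs.v *)
(* The value group G (written multiplicatively in the paper)
   is written ADDITIVELY here: identity e = 0, product = +, g^2 = g + g. *)
From HB Require Import structures.
From mathcomp Require Import all_boot all_order all_algebra.
Set Implicit Arguments. Unset Strict Implicit. Unset Printing Implicit Defensive.
Import GRing.Theory.
Local Open Scope ring_scope.

Section Defs.

Variable G : zmodType.
Variable le : G -> G -> Prop.

Definition is_ordered_group : Prop :=
  [/\ (forall g, le g g),
      (forall g h, le g h -> le h g -> g = h),
      (forall g h k, le g h -> le h k -> le g k),
      (forall g h, le g h \/ le h g) &
      (forall g h k, le g h -> le (g + k) (h + k))].

Definition lt (g h : G) : Prop := le g h /\ g <> h.

(* order on G u {oo}, with None = oo the top element *)
Definition ole (a b : option G) : Prop :=
  match a, b with
  | _, None => True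
  | None, Some _ => False
  | Some g, Some h => le g h
  end.
Definition olt (a b : option G) : Prop := ole a b /\ a <> b.

Definition oadd (a b : option G) : option G :=
  match a, b with Some g, Some h => Some (g + h) | _, _ => None end.

Definition sqclass_eq (g h : G) : Prop := exists k, g - h = k + k.

Variable K : fieldType.
Variable val : K -> option G.

Definition is_valuation : Prop :=
  [/\ (forall x, val x = None <-> x = 0),
      (forall x y, val (x * y) = oadd (val x) (val y)),
      (forall x y g, ole (Some g) (val x) -> ole (Some g) (val y) ->
         ole (Some g) (val (x + y))) &   (* val(x+y) >= min(val x, val y) *)
      (forall g, exists x, val x = Some g)].

Definition inB (x : K) : Prop := ole (Some 0) (val x).
Definition unitB (x : K) : Prop := [/\ inB x, x != 0 & inB x^-1].

(* residue map pi : B -> F onto the residue field F (given as a total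
   function on K; only its values on B matter) *)
Variable F : fieldType.
Variable pi : K -> F.

Definition is_residue_map : Prop :=
  [/\ pi 1 = 1,
      (forall x y, inB x -> inB y -> pi (x + y) = pi x + pi y),
      (forall x y, inB x -> inB y -> pi (x * y) = pi x * pi y),
      (forall x, inB x -> (pi x = 0 <-> olt (Some 0) (val x))) &
      (forall c, exists x, inB x /\ pi x = c)].

Definition strict_unit (x : K) : Prop := unitB x /\ pi x = 1.

(* 2-henselian, in the form valid when char F <> 2 (see context):
   every strict unit is a square in K *)
Definition two_henselian : Prop :=
  forall x, strict_unit x -> exists y, x = y ^+ 2.

Variable pan : K -> F.

Definition is_pseudo_angular : Prop :=
  (forall x, x != 0 -> pan x != 0) /\ [/\
      (forall u, unitB u -> pan u = pi u),                                (* (1) *)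
      (forall u x, unitB u -> x != 0 -> pan (u * x) = pi u * pan x),      (* (2) *)
      (forall g c, c != 0 -> exists w, val w = Some g /\ pan w = c),      (* (3) *)
      (forall x1 x2, x1 != 0 -> x2 != 0 -> x1 + x2 != 0 ->                (* (4) *)
         (olt (val x1) (val x2) -> pan (x1 + x2) = pan x1) /\
         (val x1 = val x2 -> pan x1 + pan x2 != 0 ->
            val (x1 + x2) = val x1 /\ pan (x1 + x2) = pan x1 + pan x2)) &
      (forall x y g h, x != 0 -> y != 0 -> val x = Some g -> val y = Some h -> (* (5) *)
         sqclass_eq g h -> pan x = pan y -> exists u, u != 0 /\ y = u ^+ 2 * x)] /\
      (forall a u, a != 0 -> u != 0 ->                                    (* (6) *)
         exists k, k != 0 /\ pan (a * u ^+ 2) = pan a * k ^+ 2).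

Variable A : K -> Prop.

Definition is_overring : Prop :=
  A 0 /\ [/\ A 1,
      (forall x y, A x -> A y -> A (x + y)),
      (forall x, A x -> A (- x)),
      (forall x y, A x -> A y -> A (x * y)) &
      (forall x, inB x -> A x)].

Definition inH (g : G) : Prop :=
  exists a, [/\ A a, a != 0, A a^-1 & val a = Some g].

(* quasi-quadratic module in A (taken nonempty) *)
Definition quasi_quadratic (M : K -> Prop) : Prop :=
  [/\ (forall x, M x -> A x),
      (exists x, M x),
      (forall x y, M x -> M y -> M (x + y)) &
      (forall a x, A a -> M x -> M (a ^+ 2 * x))].

Definition Mg (M : K -> Prop) (g : G) (c : F) : Prop :=
  (exists x, [/\ M x, x != 0, val x = Some g & pan x = c]) \/ c = 0.

End Defs.

Definition setI_p (T : Type) (P Q : T -> Prop) : T -> Prop := fun x => P x /\ Q x.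
Definition setSum_p (T : zmodType) (P Q : T -> Prop) : T -> Prop :=
  fun z => exists x y, [/\ P x, Q y & z = x + y].
Definition seteq_p (T : Type) (P Q : T -> Prop) : Prop := forall x, P x <-> Q x.
Definition setfull_p (T : Type) (P : T -> Prop) : Prop := forall x, P x.

(* Main.v *)
Require Import Defs.
From mathcomp Require Import all_boot all_order all_algebra.
From mathcomp Require Import ring.
Import GRing.Theory.
Local Open Scope ring_scope.
Set Implicit Arguments. Unset Strict Implicit.

Section Proof.
Variable G : zmodType.
Variable le : G -> G -> Prop.
Variable K : fieldType.
Variable val : K -> option G.
Variable F : fieldType.
Variables (pi pan : K -> F).
Variable A : K -> Prop.
Hypothesis hG : is_ordered_group le.
Hypothesis hval : is_valuation le val.
Hypothesis hpi : is_residue_map le val pi.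
Hypothesis hpan : is_pseudo_angular le val pi pan.
Hypothesis hA : is_overring le val A.

Lemma lerefl g : le g g. Proof. case: hG => H _ _ _ _; exact: H. Qed.
Lemma leanti g h : le g h -> le h g -> g = h. Proof. case: hG => _ H _ _ _; exact: H. Qed.
Lemma letot g h : le g h \/ le h g. Proof. case: hG => _ _ _ H _; exact: H. Qed.
Lemma leadd g h k : le g h -> le (g + k) (h + k). Proof. case: hG => _ _ _ _ H; exact: H. Qed.

Lemma tors (g : G) : g + g = 0 -> g = 0.
Proof.
move=> H; case: (letot 0 g) => H1.
- apply: (@leanti g 0 _ H1). have := leadd g H1. by rewrite add0r H.
- apply: (@leanti g 0 H1). have := leadd g H1. by rewrite add0r H.
Qed.

Lemma val0iff x : val x = None <-> x = 0. Proof. by case: hval. Qed.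
Lemma valM x y : val (x * y) = oadd (val x) (val y). Proof. by case: hval. Qed.
Lemma valD x y g : ole le (Some g) (val x) -> ole le (Some g) (val y) ->
  ole le (Some g) (val (x + y)).
Proof. by case: hval => _ _ H _; apply: H. Qed.
Lemma valsurj g : exists x, val x = Some g. Proof. by case: hval. Qed.

Lemma val_nz x : x != 0 -> exists a, val x = Some a.
Proof. move=> /eqP nx; case E: (val x) => [a|]; first by exists a. by move/val0iff: E. Qed.
Lemma val_Some x a : val x = Some a -> x != 0.
Proof. move=> E; apply/eqP => x0; move: E; by rewrite x0 (proj2 (val0iff 0) erefl). Qed.

Lemma val1 : val 1 = Some 0.
Proof.
have [a Ha] := val_nz (oner_neq0 K).
have := valM 1 1; rewrite mulr1 Ha /= => -[E].
congr Some; apply: (@addrI _ a); by rewrite addr0 -E.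
Qed.

Lemma valN1 : val (-1) = Some 0.
Proof.
have n1 : (-1 : K) != 0 by rewrite oppr_eq0 oner_neq0.
have [a Ha] := val_nz n1.
have := valM (-1) (-1); rewrite mulrNN mulr1 val1 Ha /= => -[E].
congr Some; apply: tors; by rewrite -E.
Qed.

Lemma valN x : val (- x) = val x.
Proof. rewrite -mulN1r valM valN1; by case: (val x) => //= b; rewrite add0r. Qed.

Lemma valV x a : val x = Some a -> val x^-1 = Some (- a).
Proof.
move=> Ha; have nx := val_Some Ha.
have := valM x x^-1; rewrite mulfV // val1 Ha.
case E: (val x^-1) => [b|] //= [E'].
congr Some; apply: (@addrI _ a); by rewrite -E' subrr.
Qed.

Lemma val_strict x y a b : val x = Some a -> val y = Some b -> le a b -> a <> b ->
  val (x + y) = Some a.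
Proof.
move=> Ha Hb hab nab.
have H1 : ole le (Some a) (val (x + y)).
  apply: valD; [rewrite Ha /=; apply: lerefl | by rewrite Hb].
case E: (val (x + y)) => [c|].
- rewrite E /= in H1; congr Some.
  have [->|nca] := eqVneq c a; first done.
  have xe : x = (x + y) + (- y) by rewrite addrK.
  case: (letot c b) => hcb.
  + have : ole le (Some c) (val x).
      rewrite xe; apply: valD; first by rewrite E /=; apply: lerefl.
      by rewrite valN Hb.
    rewrite Ha /= => hca. exfalso; move/eqP: nca; apply; exact: leanti.
  + have : ole le (Some b) (val x).
      rewrite xe; apply: valD; first by rewrite E.
      by rewrite valN Hb /=; apply: lerefl.
    rewrite Ha /= => hba. exfalso; apply: nab; exact: leanti.
- move/val0iff: E => /eqP; rewrite addr_eq0 => /eqP yx.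
  move: Ha; rewrite yx valN Hb => -[ba]. by case: nab.
Qed.

Lemma inB_A x : inB le val x -> A x. Proof. by case: hA => _ [_ _ _ _ H]; apply: H. Qed.

Lemma unit0 u : val u = Some 0 -> unitB le val u.
Proof.
move=> Hu; split.
- by rewrite /inB Hu /=; apply: lerefl.
- exact: val_Some Hu.
- by rewrite /inB (valV Hu) oppr0 /=; apply: lerefl.
Qed.

Lemma inB0 u : val u = Some 0 -> inB le val u.
Proof. by move=> Hu; rewrite /inB Hu /=; apply: lerefl. Qed.

Lemma pi0 : pi 0 = 0.
Proof.
have B0 : inB le val 0 by rewrite /inB (proj2 (val0iff 0) erefl).
case: hpi => _ piD _ _ _.
have := piD _ _ B0 B0; rewrite addr0 => E; apply: (@addrI _ (pi 0)); by rewrite addr0 -E.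
Qed.

Lemma piN1 : pi (-1) = -1.
Proof.
case: hpi => pi1 piD _ _ _.
have := piD _ _ (inB0 val1) (inB0 valN1); rewrite subrr pi0 pi1 => /esym/eqP.
by rewrite addrC addr_eq0 => /eqP.
Qed.

Lemma lift k : k != 0 -> exists t, val t = Some 0 /\ pi t = k.
Proof.
move=> nk; case: hpi => _ _ _ Hz Hs. have [t [Bt Pt]] := Hs k.
exists t; split => //.
move: (Bt); rewrite /inB; case E: (val t) => [a|] /= Ha.
- have [->|na] := eqVneq a 0 => //.
  exfalso; move/eqP: nk; apply; rewrite -Pt; apply/(Hz t Bt).
  split; first by rewrite E.
  rewrite E => -[] /esym /eqP; by rewrite (negbTE na).
- move/val0iff: E => t0; exfalso; move/eqP: nk; apply; by rewrite -Pt t0 pi0.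
Qed.

Lemma valsq t : val t = Some 0 -> val (t ^+ 2) = Some 0.
Proof. by move=> Ht; rewrite expr2 valM Ht /= addr0. Qed.
Lemma valsqM t x : val t = Some 0 -> val (t ^+ 2 * x) = val x.
Proof. move=> Ht; rewrite valM valsq //; by case: (val x) => //= b; rewrite add0r. Qed.

Lemma pansqM t x : val t = Some 0 -> x != 0 -> pan (t ^+ 2 * x) = pi t ^+ 2 * pan x.
Proof.
move=> Ht nx; case: hpan => _ [[_ H2 _ _ _] _].
rewrite (H2 _ _ (unit0 (valsq Ht)) nx).
congr (_ * _); rewrite !expr2; case: hpi => _ _ HM _ _; apply: HM; exact: inB0.
Qed.

Lemma panN x : x != 0 -> pan (- x) = - pan x.
Proof.
move=> nx; case: hpan => _ [[_ H2 _ _ _] _].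
by rewrite -mulN1r H2 // ?piN1 ?mulN1r //; apply: unit0; apply: valN1.
Qed.

Lemma panNZ x : x != 0 -> pan x != 0.
Proof. by case: hpan => H _; apply: H. Qed.


Lemma qqA M x : quasi_quadratic A M -> M x -> A x.
Proof. by case=> H _ _ _; apply: H. Qed.
Lemma qq0 M : quasi_quadratic A M -> M 0.
Proof.
case=> _ [x Mx] _ H; have := H 0 x (proj1 hA) Mx. by rewrite expr2 !mul0r.
Qed.
Lemma qqD M x y : quasi_quadratic A M -> M x -> M y -> M (x + y).
Proof. by case=> _ _ H _; apply: H. Qed.
Lemma qqsq M t x : quasi_quadratic A M -> val t = Some 0 -> M x -> M (t ^+ 2 * x).
Proof. case=> _ _ _ H Ht; apply: H; apply: inB_A; exact: inB0. Qed.

Lemma sq_same x y g : x != 0 -> y != 0 -> val x = Some g -> val y = Some g -> pan x = pan y ->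
  exists u, val u = Some 0 /\ y = u ^+ 2 * x.
Proof.
move=> nx ny Hx Hy Hp.
case: hpan => _ [[_ _ _ _ H5] _].
have [u [nu yE]] := H5 x y g g nx ny Hx Hy (ex_intro _ 0 (etrans (subrr g) (esym (addr0 0)))) Hp.
exists u; split => //. have [b Hb] := val_nz nu.
move: Hy; rewrite yE valM expr2 valM Hb Hx /= => -[E].
congr Some; apply: tors; apply: (@addIr _ g); by rewrite add0r.
Qed.

Lemma sum_same x y a : x != 0 -> y != 0 -> val x = Some a -> val y = Some a ->
  pan x + pan y != 0 ->
  [/\ x + y != 0, val (x + y) = Some a & pan (x + y) = pan x + pan y].
Proof.
move=> nx ny vx vy ns.
have nxy : x + y != 0.
  apply/eqP => /eqP; rewrite addr_eq0 => /eqP xe.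
  by move: ns; rewrite xe panN // addNr eqxx.
case: hpan => _ [[_ _ _ H4 _] _].
have [_ H] := H4 x y nx ny nxy. have [v p] := H (etrans vx (esym vy)) ns.
by split => //; rewrite v.
Qed.

Lemma part1 M N g : quasi_quadratic A M -> quasi_quadratic A N ->
  seteq_p (Mg val pan (setI_p M N) g) (setI_p (Mg val pan M g) (Mg val pan N g)).
Proof.
move=> hM hN c; split.
- case=> [[x [[Mx Nx] nx vx px]]|->]; split; try (by right); left; by exists x.
- case=> [[[x [Mx nx vx px]]|->] [[y [Ny ny vy py]]|c0]]; try (by right).
  left; have [u [Hu yE]] := sq_same nx ny vx vy (etrans px (esym py)).
  exists y; split => //; split => //; rewrite yE; exact: qqsq.
Qed.

Lemma sumL M N x : quasi_quadratic A N -> M x -> setSum_p M N x.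
Proof. move=> hN Mx; exists x, 0; split => //; [exact: qq0|by rewrite addr0]. Qed.
Lemma sumR M N y : quasi_quadratic A M -> N y -> setSum_p M N y.
Proof. move=> hM Ny; exists 0, y; split => //; [exact: qq0|by rewrite add0r]. Qed.
Lemma sumD M N a b : quasi_quadratic A M -> quasi_quadratic A N ->
  setSum_p M N a -> setSum_p M N b -> setSum_p M N (a + b).
Proof.
move=> hM hN [x1 [y1 [M1 N1 ->]]] [x2 [y2 [M2 N2 ->]]].
exists (x1 + x2), (y1 + y2); split; [exact: qqD|exact: qqD|].
by rewrite addrACA.
Qed.
Lemma sumsq M N t z : quasi_quadratic A M -> quasi_quadratic A N -> val t = Some 0 ->
  setSum_p M N z -> setSum_p M N (t ^+ 2 * z).
Proof.
move=> hM hN Ht [x [y [Mx Ny ->]]].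
exists (t ^+ 2 * x), (t ^+ 2 * y); split; [exact: qqsq|exact: qqsq|by rewrite mulrDr].
Qed.

Lemma full_sub M N h z : quasi_quadratic A M -> quasi_quadratic A N ->
  setfull_p (setSum_p (Mg val pan M h) (Mg val pan N h)) ->
  z != 0 -> val z = Some h -> setSum_p M N z.
Proof.
move=> hM hN full nz vz.
suff [w [Sw nw vw pw]] : exists w, [/\ setSum_p M N w, w != 0, val w = Some h & pan w = pan z].
  have [u [Hu ->]] := sq_same nw nz vw vz pw. exact: sumsq.
have [m [n [Mm Nn E]]] := full (pan z).
have pz := panNZ nz.
case: Mm => [[x [Mx nx vx px]]|m0]; case: Nn => [[y [Ny ny vy py]]|n0].
- have [nxy vxy pxy] := sum_same nx ny vx vy ltac:(by rewrite px py -E).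
  exists (x + y); split => //; [by exists x, y | by rewrite pxy px py].
- exists x; split => //; [exact: sumL | by rewrite E n0 addr0].
- exists y; split => //; [exact: sumR | by rewrite E m0 add0r].
- by move: pz; rewrite E m0 n0 addr0 eqxx.
Qed.

Lemma part2 M N g h : quasi_quadratic A M -> quasi_quadratic A N -> le h g ->
  setfull_p (setSum_p (Mg val pan M h) (Mg val pan N h)) ->
  setfull_p (Mg val pan (setSum_p M N) g).
Proof.
move=> hM hN hle full c.
have [->|nc] := eqVneq c 0; first by right.
left. case: hpan => _ [[_ _ H3 _ _] _]. have [w [vw pw]] := H3 g c nc.
have nw := val_Some vw. exists w; split => //.
have [hg|nhg] := eqVneq h g.
  subst; exact: (full_sub hM hN full nw vw).
have [z0 vz] := valsurj h. have nz := val_Some vz.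
have vd : val (- z0 + w) = Some h.
  apply: val_strict; [by rewrite valN vz|exact vw|exact hle|by apply/eqP].
have -> : w = (- z0 + w) + z0 by rewrite addrAC addNr add0r.
apply: sumD => //; apply: (full_sub hM hN full) => //; exact: val_Some vd.
Qed.


Lemma Mg_sq M a d k : quasi_quadratic A M -> Mg val pan M a d -> Mg val pan M a (k ^+ 2 * d).
Proof.
move=> hM [[x [Mx nx vx px]]|->]; last by right; rewrite mulr0.
have [->|nk] := eqVneq k 0; first by right; rewrite expr2 !mul0r.
have [t [vt pt]] := lift nk.
left; exists (t ^+ 2 * x); split.
- exact: qqsq.
- by apply: (@val_Some _ a); rewrite valsqM.
- by rewrite valsqM.
- by rewrite pansqM // pt px.
Qed.

Lemma full_from M N a x y : (2%:R : F) != 0 ->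
  quasi_quadratic A M -> quasi_quadratic A N ->
  M x -> N y -> x != 0 -> y != 0 -> val x = Some a -> val y = Some a ->
  pan x + pan y = 0 -> setfull_p (setSum_p (Mg val pan M a) (Mg val pan N a)).
Proof.
move=> h2 hM hN Mx Ny nx ny vx vy s0 e.
have py : pan y = - pan x by apply/eqP; rewrite -addr_eq0 addrC s0.
have dn := panNZ nx.
set d := pan x in py dn *.
pose p := (e / d + 1) / 2%:R. pose q := (e / d - 1) / 2%:R.
exists (p ^+ 2 * d), (q ^+ 2 * pan y); split.
- by apply: (@Mg_sq M a d p hM); left; exists x; split.
- by apply: (@Mg_sq N a (pan y) q hN); left; exists y; split.
- rewrite py /p /q; field; by rewrite dn h2.
Qed.

Lemma part3a M N g c : quasi_quadratic A M -> quasi_quadratic A N ->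
  setSum_p (Mg val pan M g) (Mg val pan N g) c -> Mg val pan (setSum_p M N) g c.
Proof.
move=> hM hN [m [n [Mm Nn ->]]].
case: Mm => [[x [Mx nx vx px]]|->]; case: Nn => [[y [Ny ny vy py]]|->].
- have [->|nmn] := eqVneq (m + n) 0; first by right.
  have [nxy vxy pxy] := sum_same nx ny vx vy ltac:(by rewrite px py).
  left; exists (x + y); split => //; [by exists x, y | by rewrite pxy px py].
- left; exists x; rewrite addr0; split => //; exact: sumL.
- left; exists y; rewrite add0r; split => //; exact: sumR.
- by right; rewrite addr0.
Qed.

Lemma part3b M N g c : (2%:R : F) != 0 -> quasi_quadratic A M -> quasi_quadratic A N ->
  ~ (exists h, [/\ inH val A h \/ le 0 h, le h g &
                  setfull_p (setSum_p (Mg val pan M h) (Mg val pan N h))]) ->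
  Mg val pan (setSum_p M N) g c -> setSum_p (Mg val pan M g) (Mg val pan N g) c.
Proof.
move=> h2 hM hN nex [[z [[x [y [Mx Ny zE]]] nz vz pz]]|->]; last first.
  by exists 0, 0; split; [right|right|rewrite addr0].
subst z.
have [x0|nx] := eqVneq x 0.
  subst x; rewrite add0r in nz vz pz.
  exists 0, c; split; [by right| left; exists y; split => // | by rewrite add0r].
have [y0|ny] := eqVneq y 0.
  subst y; rewrite addr0 in nz vz pz.
  exists c, 0; split; [left; exists x; split => //|by right | by rewrite addr0].
have [a va] := val_nz nx; have [b vb] := val_nz ny.
case: hpan => _ [[_ _ _ H4 _] _].
have [ab|nab] := eqVneq a b.
- subst b. have [s0|ns] := eqVneq (pan x + pan y) 0.
  + exfalso; apply: nex; exists a; split.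
    * case: (letot 0 a) => h0; [by right|left].
      exists x; split => //; first exact: qqA Mx.
      apply: inB_A; rewrite /inB (valV va) /=.
      by have := leadd (-a) h0; rewrite subrr add0r.
    * have : ole le (Some a) (val (x + y)).
        by apply: valD; rewrite ?va ?vb /=; apply: lerefl.
      by rewrite vz.
    * exact: (full_from h2 hM hN Mx Ny nx ny va vb s0).
  + have [_ vxy pxy] := sum_same nx ny va vb ns.
    rewrite vz in vxy; injection vxy => ag; subst g.
    exists (pan x), (pan y); split; [left; exists x; split => //|left; exists y; split => //|by rewrite -pz].
- case: (letot a b) => hab.
  + have vxy := val_strict va vb hab (elimN eqP nab).
    rewrite vz in vxy; injection vxy => ag; subst g.
    have [H _] := H4 x y nx ny nz.
    have pxy : pan (x + y) = pan x.
      by apply: H; split; [rewrite va vb | rewrite va vb => -[]; apply/eqP].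
    exists c, 0; split; [left; exists x; split => //; by rewrite -pz | by right | by rewrite addr0].
  + have nba : b != a by rewrite eq_sym.
    have vxy := val_strict vb va hab (elimN eqP nba).
    rewrite addrC in nz vz pz.
    rewrite vz in vxy; injection vxy => bg; subst g.
    have [H _] := H4 y x ny nx nz.
    have pxy : pan (y + x) = pan y.
      by apply: H; split; [rewrite va vb | rewrite va vb => -[]; apply/eqP].
    exists 0, c; split; [by right | left; exists y; split => //; by rewrite -pz | by rewrite add0r].
Qed.

End Proof.

Theorem mainTheorem11
  (G : zmodType) (le : G -> G -> Prop)
  (K : fieldType) (val : K -> option G)
  (F : fieldType) (pi : K -> F) (pan : K -> F)
  (A : K -> Prop) (M N : K -> Prop)
  (hG : is_ordered_group le)
  (hval : is_valuation le val)
  (hpi : is_residue_map le val pi)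
  (hchar : (2%:R : F) != 0)
  (hhens : two_henselian le val pi)
  (hpan : is_pseudo_angular le val pi pan)
  (hA : is_overring le val A)
  (hM : quasi_quadratic A M) (hN : quasi_quadratic A N)
  (g : G) (hg : inH val A g \/ le 0 g) :
  seteq_p (Mg val pan (setI_p M N) g) (setI_p (Mg val pan M g) (Mg val pan N g)) /\
  ((exists h, [/\ inH val A h \/ le 0 h, le h g &
                  setfull_p (setSum_p (Mg val pan M h) (Mg val pan N h))]) ->
     setfull_p (Mg val pan (setSum_p M N) g)) /\
  (~ (exists h, [/\ inH val A h \/ le 0 h, le h g &
                  setfull_p (setSum_p (Mg val pan M h) (Mg val pan N h))]) ->
     seteq_p (Mg val pan (setSum_p M N) g) (setSum_p (Mg val pan M g) (Mg val pan N g))).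
Proof.
split; first exact: (part1 hG hval hpan hA g hM hN).
split.
- move=> [h [_ hle full]]; exact: (part2 hG hval hpi hpan hA hM hN hle full).
- move=> nex c; split.
  + exact: (part3b hG hval hpi hpan hA hchar hM hN nex).
  + exact: (part3a hG hval hpi hpan hA hM hN).
Qed.
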